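(* For $i,j\in\{1,\dots,d\}$ and $y\in(-1,1)$ let $$z_{ij}(y)=\Big(\sum_{n_0,n_1\ge0}\exp\Big(-\tfrac12\big(Q_{i,n_0}^2+Q_{j,n_1}^2-2yQ_{i,n_0}Q_{j,n_1}\big)\Big)\Big)^{-1}.$$ Then the matrix $(-z_{ij}'(0))_{i,j=1}^d$ is positive semidefinite, and for each $i$, $$|z_{ii}'(0)|\le\frac{(m_i^{(1)}(1))^2}{(m_i^{(0)}(1))^4}.$$
   Context: For each $i$, $Q_{i,n}=\Phi^{-1}(P[X_{i,t}\le n])$ where $X_{i,t}$ is $\mathbb N_0$-valued and $\Phi$ is the standard normal CDF (summands with $Q=\pm\infty$ are $0$). $m_i^{(k)}(u)=\frac1{\sqrt{2\pi}}\sum_{n\ge0}e^{-Q_{i,n}^2/(2u)}|Q_{i,n}|^k$. It is assumed that the relevant series $m_i^{(k)}(u)$ ($k\le 2$, $u$ in a neighborhood of $1$) are finite and $m_i^{(0)}(1)>0$, so that $z_{ij}$ is differentiable and termwise differentiation is valid. *)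

(* Defs.v *)
From HB Require Import structures.
From mathcomp Require Import all_boot all_order all_algebra.
From mathcomp Require Import all_classical all_reals all_analysis.
From mathcomp Require Import normal_distribution.

Set Implicit Arguments.
Unset Strict Implicit.
Unset Printing Implicit Defensive.

Import Order.TTheory GRing.Theory Num.Def Num.Theory.
Import numFieldNormedType.Exports.

Local Open Scope classical_set_scope.
Local Open Scope ring_scope.

Section defs.
Context {R : realType}.

Definition Phi (x : R) : R := fine (normal_prob 0 1 `]-oo, x]).

Definition Phi_inv (p : R) : \bar R :=
  if p <= 0 then -oo%E
  else if 1 <= p then +oo%E
  else (xget 0 [set x : R | Phi x = p])%:E.

Definition Qseq {d : nat} {dT : measure_display} {T : measurableType dT}
  (P : probability T R) (X : 'I_d -> T -> nat) (i : 'I_d) (n : nat) : \bar R :=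
  Phi_inv (fine (P [set w | (X i w <= n)%N])).

Definition mterm (u : R) (k : nat) (q : \bar R) : R :=
  match q with
  | EFin r => expR (- r ^+ 2 / (2 * u)) * `|r| ^+ k
  | _ => 0
  end.

Definition mser (Q : nat -> \bar R) (k : nat) (u : R) : \bar R :=
  ((Num.sqrt (2 * pi))^-1)%:E * (\sum_(n <oo) (mterm u k (Q n))%:E)%E.

Definition zterm (y : R) (a b : \bar R) : R :=
  match a, b with
  | EFin a, EFin b => expR (- (a ^+ 2 + b ^+ 2 - 2 * y * a * b) / 2)
  | _, _ => 0
  end.

Definition zfun (Qi Qj : nat -> \bar R) (y : R) : R :=
  (fine (\sum_(n0 <oo) \sum_(n1 <oo) (zterm y (Qi n0) (Qj n1))%:E)%E)^-1.

End defs.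

Definition psd {R : realType} {d : nat} (M : 'M[R]_d) : Prop :=
  M^T = M /\ forall v : 'rV[R]_d, 0 <= (v *m M *m v^T) 0 0.

(* Main.v *)
Require Import Defs.
From HB Require Import structures.
From mathcomp Require Import all_boot all_order all_algebra.
From mathcomp Require Import all_classical all_reals all_analysis.

From mathcomp Require Import ring lra.
Import Order.TTheory GRing.Theory Num.Def Num.Theory.
Import numFieldNormedType.Exports.
Local Open Scope ring_scope.


Section S.
Context {R : realType}.


Definition gq (q : \bar R) : R :=
  match q with EFin r => expR (- r ^+ 2 / 2) | _ => 0 end.
Definition pp (x : R) : R := if 0 <= x then x else 0.
Definition nn (x : R) : R := if 0 <= x then 0 else - x.

Lemma pp_ge0 x : 0 <= pp x.
Proof. rewrite /pp; case: ifP => //; lra. Qed.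
Lemma nn_ge0 x : 0 <= nn x.
Proof. rewrite /nn; case: ifPn => //; rewrite -ltNge; lra. Qed.
Lemma ppnn x : x = pp x - nn x.
Proof. rewrite /pp /nn; case: ifP => _; lra. Qed.
Lemma norm_ppnn x : `|x| = pp x + nn x.
Proof.
rewrite /pp /nn; case: ifPn => hx; first by rewrite ger0_norm //; lra.
by rewrite ltr0_norm ?ltNge //; lra.
Qed.

Lemma gq_ge0 q : 0 <= gq q.
Proof. by case: q => //= r; rewrite expR_ge0. Qed.

Lemma rem_ge0 (t : R) : 0 <= expR t - 1 - t.
Proof. have := expR_ge1Dx t; lra. Qed.

Lemma rem_le (t : R) : expR t - 1 - t <= t ^+ 2 * expR `|t|.
Proof.
have h1 := expR_ge1Dx (- t).
have h2 : expR t * expR (- t) = 1 by rewrite -expRD subrr expR0.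
have e0 : 0 < expR t := expR_gt0 t.
have A : expR t - 1 <= t * expR t.
  have : expR t * (1 - t) <= expR t * expR (-t) by rewrite ler_pM2l.
  rewrite h2; nra.
case: (leP 0 t) => ht.
  rewrite ger0_norm //.
  have : t * (expR t - 1) <= t * (t * expR t) by rewrite ler_wpM2l.
  nra.
rewrite ltr0_norm //.
have e1 : 1 <= expR (- t) by rewrite -expR0 ler_expR oppr_ge0 ltW.
have B : expR t - 1 - t <= t * (expR t - 1) by nra.
have C : t * (expR t - 1) <= t ^+ 2.
  have : 1 - expR t <= - t by have := expR_ge1Dx t; lra.
  nra.
nra.
Qed.



Lemma dsumD (f g : nat -> nat -> R) :
  (forall n m, 0 <= f n m) -> (forall n m, 0 <= g n m) ->
  (\sum_(n <oo) \sum_(m <oo) ((f n m + g n m)%:E) =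
   \sum_(n <oo) \sum_(m <oo) ((f n m)%:E) + \sum_(n <oo) \sum_(m <oo) ((g n m)%:E))%E.
Proof.
move=> hf hg.
rewrite -nneseriesD; last 2 first.
- by move=> n _ _; apply: nneseries_ge0 => m _ _; rewrite lee_fin.
- by move=> n _ _; apply: nneseries_ge0 => m _ _; rewrite lee_fin.
apply: eq_eseriesr => n _.
rewrite -nneseriesD //; last 2 first.
- by move=> m _ _; rewrite lee_fin.
- by move=> m _ _; rewrite lee_fin.
Qed.

Lemma dsep (c : R) (x w : nat -> R) (Xr Wr : R) :
  0 <= c -> (forall n, 0 <= x n) -> (forall m, 0 <= w m) ->
  (\sum_(n <oo) (x n)%:E = Xr%:E)%E -> (\sum_(m <oo) (w m)%:E = Wr%:E)%E ->
  (\sum_(n <oo) \sum_(m <oo) ((c * x n * w m)%:E) = (c * Xr * Wr)%:E)%E.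
Proof.
move=> hc hx hw hX hW.
transitivity (\sum_(n <oo) ((Wr * c) %:E * (x n)%:E))%E.
  apply: eq_eseriesr => n _.
  under eq_eseriesr do rewrite EFinM.
  rewrite nneseriesZl; last by move=> m _; rewrite lee_fin.
  by rewrite hW -!EFinM; congr (_%:E); ring.
rewrite nneseriesZl; last by move=> m _; rewrite lee_fin.
by rewrite hX -EFinM; congr (_%:E); ring.
Qed.

Lemma zterm_eq y q1 q2 :
  zterm y q1 q2 = gq q1 * gq q2 * expR (y * fine q1 * fine q2).
Proof.
case: q1 => [a| |]; case: q2 => [b| |] //=; rewrite ?(mul0r, mulr0) //.
by rewrite -!expRD; congr expR; field.
Qed.


Lemma term_bound (a b y u0 : R) : 1 < u0 -> `|y| <= 1 - u0^-1 ->
  expR (- a ^+ 2 / 2) * expR (- b ^+ 2 / 2) * (expR (y * a * b) - 1 - y * a * b)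
  <= y ^+ 2 * (expR (- a ^+ 2 / (2 * u0)) * `|a| ^+ 2)
            * (expR (- b ^+ 2 / (2 * u0)) * `|b| ^+ 2).
Proof.
move=> hu hy.
set t := y * a * b.
have h1 := rem_le t.
have hy0 : 0 <= `|y| := normr_ge0 y.
have h2 : `|t| <= `|y| * a ^+ 2 / 2 + `|y| * b ^+ 2 / 2.
  rewrite /t !normrM.
  have : `|a| * `|b| <= a ^+ 2 / 2 + b ^+ 2 / 2.
    rewrite -(real_normK (num_real a)) -(real_normK (num_real b)).
    have := sqr_ge0 (`|a| - `|b|); lra.
  move=> h; have := ler_wpM2l hy0 h; lra.
have h3 : expR `|t| <= expR (`|y| * a ^+ 2 / 2) * expR (`|y| * b ^+ 2 / 2).
  by rewrite -expRD ler_expR.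
have hv : 0 < u0^-1 by rewrite invr_gt0; lra.
have h4 : forall c : R, expR (- c ^+ 2 / 2) * expR (`|y| * c ^+ 2 / 2)
                        <= expR (- c ^+ 2 / (2 * u0)).
  move=> c; rewrite -expRD ler_expR invfM.
  have hc := sqr_ge0 c.
  have : 0 <= c ^+ 2 * (1 - `|y| - u0^-1) by apply: mulr_ge0 => //; lra.
  lra.
have ea := expR_gt0 (- a ^+ 2 / 2).
have eb := expR_gt0 (- b ^+ 2 / 2).
have eya := expR_gt0 (`|y| * a ^+ 2 / 2).
have eyb := expR_gt0 (`|y| * b ^+ 2 / 2).
rewrite (real_normK (num_real a)) (real_normK (num_real b)).
apply: le_trans (_ : expR (- a ^+ 2 / 2) * expR (- b ^+ 2 / 2) *
   (t ^+ 2 * (expR (`|y| * a ^+ 2 / 2) * expR (`|y| * b ^+ 2 / 2))) <= _).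
  rewrite ler_pM2l ?mulr_gt0 //.
  apply: le_trans h1 _; have := sqr_ge0 t; have := expR_gt0 `|t|; nra.
have -> : expR (- a ^+ 2 / 2) * expR (- b ^+ 2 / 2) *
   (t ^+ 2 * (expR (`|y| * a ^+ 2 / 2) * expR (`|y| * b ^+ 2 / 2))) =
   y ^+ 2 * (expR (- a ^+ 2 / 2) * expR (`|y| * a ^+ 2 / 2) * a ^+ 2) *
   (expR (- b ^+ 2 / 2) * expR (`|y| * b ^+ 2 / 2) * b ^+ 2) by rewrite /t; ring.
have ha := sqr_ge0 a; have hb := sqr_ge0 b; have hy2 := sqr_ge0 y.
have h4a := h4 a; have h4b := h4 b.
set A1 := expR (- a ^+ 2 / 2) * _. set B1 := expR (- b ^+ 2 / 2) * _.
set A2 := expR (- a ^+ 2 / (2 * u0)). set B2 := expR (- b ^+ 2 / (2 * u0)).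
have hA1 : 0 <= A1 by apply: mulr_ge0; apply: ltW.
have hB1 : 0 <= B1 by apply: mulr_ge0; apply: ltW.
have hX : y ^+ 2 * (A1 * a ^+ 2) <= y ^+ 2 * (A2 * a ^+ 2).
  exact: (ler_wpM2l hy2 (ler_wpM2r ha h4a)).
have hY : B1 * b ^+ 2 <= B2 * b ^+ 2 by exact: (ler_wpM2r hb h4b).
have hX0 : 0 <= y ^+ 2 * (A1 * a ^+ 2) by apply: mulr_ge0 => //; apply: mulr_ge0.
have hY0 : 0 <= B1 * b ^+ 2 by apply: mulr_ge0.
exact: (ler_pM hX0 hY0 hX hY).
Qed.

Lemma mterm_ge0 (u : R) (k : nat) (q : \bar R) : 0 <= mterm u k q.
Proof. by case: q => //= r; rewrite mulr_ge0 ?expR_ge0 ?exprn_ge0. Qed.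

Ltac nng := repeat first [ apply: pp_ge0 | apply: nn_ge0 | apply: gq_ge0
  | apply: expR_ge0 | apply: mterm_ge0 | apply: ler01 | apply: sqr_ge0
  | apply: rem_ge0 | apply: addr_ge0 | apply: mulr_ge0 ].

Lemma ident (G H e y a b yp yn ap an bp bn : R) :
  y = yp - yn -> a = ap - an -> b = bp - bn ->
  G * H * e + yp * (G * ap) * (H * bn) + yp * (G * an) * (H * bp)
    + yn * (G * ap) * (H * bp) + yn * (G * an) * (H * bn)
  = 1 * G * H + yp * (G * ap) * (H * bp) + yp * (G * an) * (H * bn)
    + yn * (G * ap) * (H * bn) + yn * (G * an) * (H * bp)
    + G * H * (e - 1 - y * a * b).
Proof. by move=> -> -> ->; ring. Qed.

Lemma term_boundQ (q1 q2 : \bar R) (y u0 : R) : 1 < u0 -> `|y| <= 1 - u0^-1 ->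
  gq q1 * gq q2 * (expR (y * fine q1 * fine q2) - 1 - y * fine q1 * fine q2)
  <= y ^+ 2 * mterm u0 2 q1 * mterm u0 2 q2.
Proof.
move=> hu hy.
case: q1 => [a| |]; case: q2 => [b| |] /=; rewrite ?(mul0r, mulr0);
  try by nng.
exact: term_bound.
Qed.

Lemma Sexp (Q1 Q2 : nat -> \bar R) (u0 B1 B2 P1 P2 N1 N2 M1 M2 y : R) :
  1 < u0 -> `|y| <= 1 - u0^-1 ->
  (\sum_(n <oo) (gq (Q1 n))%:E = B1%:E)%E ->
  (\sum_(n <oo) (gq (Q2 n))%:E = B2%:E)%E ->
  (\sum_(n <oo) (gq (Q1 n) * pp (fine (Q1 n)))%:E = P1%:E)%E ->
  (\sum_(n <oo) (gq (Q2 n) * pp (fine (Q2 n)))%:E = P2%:E)%E ->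
  (\sum_(n <oo) (gq (Q1 n) * nn (fine (Q1 n)))%:E = N1%:E)%E ->
  (\sum_(n <oo) (gq (Q2 n) * nn (fine (Q2 n)))%:E = N2%:E)%E ->
  (\sum_(n <oo) (mterm u0 2 (Q1 n))%:E = M1%:E)%E ->
  (\sum_(n <oo) (mterm u0 2 (Q2 n))%:E = M2%:E)%E ->
  exists r, 0 <= r <= y ^+ 2 * M1 * M2 /\
    fine (\sum_(n0 <oo) \sum_(n1 <oo) (zterm y (Q1 n0) (Q2 n1))%:E)%E
    = B1 * B2 + y * ((P1 - N1) * (P2 - N2)) + r.
Proof.
move=> hu hy hB1 hB2 hP1 hP2 hN1 hN2 hM1 hM2.
pose G n := gq (Q1 n). pose H m := gq (Q2 m).
pose a n := fine (Q1 n). pose b m := fine (Q2 m).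
pose L0 n m := G n * H m * expR (y * a n * b m).
pose L1 n m := pp y * (G n * pp (a n)) * (H m * nn (b m)).
pose L2 n m := pp y * (G n * nn (a n)) * (H m * pp (b m)).
pose L3 n m := nn y * (G n * pp (a n)) * (H m * pp (b m)).
pose L4 n m := nn y * (G n * nn (a n)) * (H m * nn (b m)).
pose R0 n m := 1 * G n * H m.
pose R1 n m := pp y * (G n * pp (a n)) * (H m * pp (b m)).
pose R2 n m := pp y * (G n * nn (a n)) * (H m * nn (b m)).
pose R3 n m := nn y * (G n * pp (a n)) * (H m * nn (b m)).
pose R4 n m := nn y * (G n * nn (a n)) * (H m * pp (b m)).
pose R5 n m := G n * H m * (expR (y * a n * b m) - 1 - y * a n * b m).
have eqsum :
  (\sum_(n <oo) \sum_(m <oo) ((L0 n m + L1 n m + L2 n m + L3 n m + L4 n m)%:E)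
  = \sum_(n <oo) \sum_(m <oo)
     ((R0 n m + R1 n m + R2 n m + R3 n m + R4 n m + R5 n m)%:E))%E.
  apply: eq_eseriesr => n _; apply: eq_eseriesr => m _.
  by rewrite (ident _ _ _ _ _ _ _ _ _ _ _ _ (ppnn y) (ppnn (a n)) (ppnn (b m))).
have nL0 n m : 0 <= L0 n m by rewrite /L0; nng.
have nL1 n m : 0 <= L1 n m by rewrite /L1; nng.
have nL2 n m : 0 <= L2 n m by rewrite /L2; nng.
have nL3 n m : 0 <= L3 n m by rewrite /L3; nng.
have nL4 n m : 0 <= L4 n m by rewrite /L4; nng.
have nR0 n m : 0 <= R0 n m by rewrite /R0; nng.
have nR1 n m : 0 <= R1 n m by rewrite /R1; nng.
have nR2 n m : 0 <= R2 n m by rewrite /R2; nng.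
have nR3 n m : 0 <= R3 n m by rewrite /R3; nng.
have nR4 n m : 0 <= R4 n m by rewrite /R4; nng.
have nR5 n m : 0 <= R5 n m by rewrite /R5; nng.
rewrite (dsumD (fun n m => L0 n m + L1 n m + L2 n m + L3 n m) L4) in eqsum; [| (move=> n m; repeat apply: addr_ge0; by [apply: nL0|apply: nL1|apply: nL2|apply: nL3|apply: nL4|apply: nR0|apply: nR1|apply: nR2|apply: nR3|apply: nR4|apply: nR5]) | (move=> n m; repeat apply: addr_ge0; by [apply: nL0|apply: nL1|apply: nL2|apply: nL3|apply: nL4|apply: nR0|apply: nR1|apply: nR2|apply: nR3|apply: nR4|apply: nR5])].
rewrite (dsumD (fun n m => L0 n m + L1 n m + L2 n m) L3) in eqsum; [| (move=> n m; repeat apply: addr_ge0; by [apply: nL0|apply: nL1|apply: nL2|apply: nL3|apply: nL4|apply: nR0|apply: nR1|apply: nR2|apply: nR3|apply: nR4|apply: nR5]) | (move=> n m; repeat apply: addr_ge0; by [apply: nL0|apply: nL1|apply: nL2|apply: nL3|apply: nL4|apply: nR0|apply: nR1|apply: nR2|apply: nR3|apply: nR4|apply: nR5])].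
rewrite (dsumD (fun n m => L0 n m + L1 n m) L2) in eqsum; [| (move=> n m; repeat apply: addr_ge0; by [apply: nL0|apply: nL1|apply: nL2|apply: nL3|apply: nL4|apply: nR0|apply: nR1|apply: nR2|apply: nR3|apply: nR4|apply: nR5]) | (move=> n m; repeat apply: addr_ge0; by [apply: nL0|apply: nL1|apply: nL2|apply: nL3|apply: nL4|apply: nR0|apply: nR1|apply: nR2|apply: nR3|apply: nR4|apply: nR5])].
rewrite (dsumD (L0) L1) in eqsum; [| (move=> n m; repeat apply: addr_ge0; by [apply: nL0|apply: nL1|apply: nL2|apply: nL3|apply: nL4|apply: nR0|apply: nR1|apply: nR2|apply: nR3|apply: nR4|apply: nR5]) | (move=> n m; repeat apply: addr_ge0; by [apply: nL0|apply: nL1|apply: nL2|apply: nL3|apply: nL4|apply: nR0|apply: nR1|apply: nR2|apply: nR3|apply: nR4|apply: nR5])].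
rewrite (dsumD (fun n m => R0 n m + R1 n m + R2 n m + R3 n m + R4 n m) R5) in eqsum; [| (move=> n m; repeat apply: addr_ge0; by [apply: nL0|apply: nL1|apply: nL2|apply: nL3|apply: nL4|apply: nR0|apply: nR1|apply: nR2|apply: nR3|apply: nR4|apply: nR5]) | (move=> n m; repeat apply: addr_ge0; by [apply: nL0|apply: nL1|apply: nL2|apply: nL3|apply: nL4|apply: nR0|apply: nR1|apply: nR2|apply: nR3|apply: nR4|apply: nR5])].
rewrite (dsumD (fun n m => R0 n m + R1 n m + R2 n m + R3 n m) R4) in eqsum; [| (move=> n m; repeat apply: addr_ge0; by [apply: nL0|apply: nL1|apply: nL2|apply: nL3|apply: nL4|apply: nR0|apply: nR1|apply: nR2|apply: nR3|apply: nR4|apply: nR5]) | (move=> n m; repeat apply: addr_ge0; by [apply: nL0|apply: nL1|apply: nL2|apply: nL3|apply: nL4|apply: nR0|apply: nR1|apply: nR2|apply: nR3|apply: nR4|apply: nR5])].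
rewrite (dsumD (fun n m => R0 n m + R1 n m + R2 n m) R3) in eqsum; [| (move=> n m; repeat apply: addr_ge0; by [apply: nL0|apply: nL1|apply: nL2|apply: nL3|apply: nL4|apply: nR0|apply: nR1|apply: nR2|apply: nR3|apply: nR4|apply: nR5]) | (move=> n m; repeat apply: addr_ge0; by [apply: nL0|apply: nL1|apply: nL2|apply: nL3|apply: nL4|apply: nR0|apply: nR1|apply: nR2|apply: nR3|apply: nR4|apply: nR5])].
rewrite (dsumD (fun n m => R0 n m + R1 n m) R2) in eqsum; [| (move=> n m; repeat apply: addr_ge0; by [apply: nL0|apply: nL1|apply: nL2|apply: nL3|apply: nL4|apply: nR0|apply: nR1|apply: nR2|apply: nR3|apply: nR4|apply: nR5]) | (move=> n m; repeat apply: addr_ge0; by [apply: nL0|apply: nL1|apply: nL2|apply: nL3|apply: nL4|apply: nR0|apply: nR1|apply: nR2|apply: nR3|apply: nR4|apply: nR5])].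
rewrite (dsumD (R0) R1) in eqsum; [| (move=> n m; repeat apply: addr_ge0; by [apply: nL0|apply: nL1|apply: nL2|apply: nL3|apply: nL4|apply: nR0|apply: nR1|apply: nR2|apply: nR3|apply: nR4|apply: nR5]) | (move=> n m; repeat apply: addr_ge0; by [apply: nL0|apply: nL1|apply: nL2|apply: nL3|apply: nL4|apply: nR0|apply: nR1|apply: nR2|apply: nR3|apply: nR4|apply: nR5])].
have hG n : 0 <= G n by exact: gq_ge0.
have hH n : 0 <= H n by exact: gq_ge0.
have e0 : (\sum_(n <oo) \sum_(m <oo) (L0 n m)%:E =
           \sum_(n0 <oo) \sum_(n1 <oo) (zterm y (Q1 n0) (Q2 n1))%:E)%E.
  by apply: eq_eseriesr => n _; apply: eq_eseriesr => m _; rewrite zterm_eq.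
have e1 : (\sum_(n <oo) \sum_(m <oo) (L1 n m)%:E = (pp y * P1 * N2)%:E)%E.
  by apply: dsep hP1 hN2 => //; try move=> n; nng.
have e2 : (\sum_(n <oo) \sum_(m <oo) (L2 n m)%:E = (pp y * N1 * P2)%:E)%E.
  by apply: dsep hN1 hP2 => //; try move=> n; nng.
have e3 : (\sum_(n <oo) \sum_(m <oo) (L3 n m)%:E = (nn y * P1 * P2)%:E)%E.
  by apply: dsep hP1 hP2 => //; try move=> n; nng.
have e4 : (\sum_(n <oo) \sum_(m <oo) (L4 n m)%:E = (nn y * N1 * N2)%:E)%E.
  by apply: dsep hN1 hN2 => //; try move=> n; nng.
have f0 : (\sum_(n <oo) \sum_(m <oo) (R0 n m)%:E = (1 * B1 * B2)%:E)%E.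
  by apply: dsep hB1 hB2 => //; try move=> n; nng.
have f1 : (\sum_(n <oo) \sum_(m <oo) (R1 n m)%:E = (pp y * P1 * P2)%:E)%E.
  by apply: dsep hP1 hP2 => //; try move=> n; nng.
have f2 : (\sum_(n <oo) \sum_(m <oo) (R2 n m)%:E = (pp y * N1 * N2)%:E)%E.
  by apply: dsep hN1 hN2 => //; try move=> n; nng.
have f3 : (\sum_(n <oo) \sum_(m <oo) (R3 n m)%:E = (nn y * P1 * N2)%:E)%E.
  by apply: dsep hP1 hN2 => //; try move=> n; nng.
have f4 : (\sum_(n <oo) \sum_(m <oo) (R4 n m)%:E = (nn y * N1 * P2)%:E)%E.
  by apply: dsep hN1 hP2 => //; try move=> n; nng.
have f5 : (\sum_(n <oo) \sum_(m <oo) (R5 n m)%:E <= (y ^+ 2 * M1 * M2)%:E)%E.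
  rewrite -(dsep _ _ _ _ _ (sqr_ge0 y) _ _ hM1 hM2); last 2 first.
    by move=> n; nng. by move=> n; nng.
  apply: lee_nneseries => [n _ _|n _]; first by apply: nneseries_ge0 => m _ _; rewrite lee_fin.
  apply: lee_nneseries => [m _ _|m _]; first by rewrite lee_fin.
  by rewrite lee_fin; apply: term_boundQ.
have f5' : (0 <= \sum_(n <oo) \sum_(m <oo) (R5 n m)%:E)%E.
  by apply: nneseries_ge0 => n _ _; apply: nneseries_ge0 => m _ _; rewrite lee_fin.
rewrite e0 e1 e2 e3 e4 f0 f1 f2 f3 f4 in eqsum.
move: f5 f5' eqsum.
set Rm := (\sum_(n <oo) \sum_(m <oo) (R5 n m)%:E)%E.
set Se := (\sum_(n0 <oo) \sum_(n1 <oo) (zterm y (Q1 n0) (Q2 n1))%:E)%E.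
case: Rm => [rm| |] //=; try by rewrite ?leye_eq ?leeNy_eq.
rewrite !lee_fin => hrm1 hrm0.
case: Se => [s| |] //=.
rewrite -!EFinD => -[hs].
exists rm; split; first by rewrite hrm0 hrm1.
rewrite (ppnn y).
have -> : s = 1 * B1 * B2 + pp y * P1 * P2 + pp y * N1 * N2 + nn y * P1 * N2 +
    nn y * N1 * P2 + rm - (pp y * P1 * N2 + pp y * N1 * P2 + nn y * P1 * P2 + nn y * N1 * N2).
  by rewrite -hs; ring.
ring.
Qed.

Lemma qcvg (S : R -> R) (B K C δ : R) : 0 < δ -> 0 <= C ->
  (forall y, `|y| < δ -> exists r, 0 <= r <= y ^+ 2 * C /\ S y = B + y * K + r) ->
  ((fun h => h^-1 * (S h - S 0)) @ 0^' --> K)%classic.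
Proof.
move=> hd hC hS.
have S0 : S 0 = B.
  have [r [/andP[r0 r1] ->]] : exists r, 0 <= r <= 0 ^+ 2 * C /\ S 0 = B + 0 * K + r.
    by apply: hS; rewrite normr0.
  move: r1; rewrite expr0n /= mul0r => r1.
  have -> : r = 0 by apply/eqP; rewrite eq_le r1 r0.
  by rewrite mul0r !addr0.
apply/cvgrPdist_le => e e0.
have eC : 0 < e / (C + 1) by rewrite divr_gt0 //; lra.
near=> h.
have hne : h != 0 by near: h; exact: nbhs_dnbhs_neq.
have hdl : `|h| < δ by near: h; exact: dnbhs0_lt.
have hs : `|h| < e / (C + 1) by near: h; exact: dnbhs0_lt.
have [r [/andP[r0 r1] ->]] := hS h hdl.
rewrite S0.
have -> : K - h^-1 * (B + h * K + r - B) = - (r / h).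
  by field.
rewrite normrN normrM normfV ger0_norm //.
have ha : 0 < `|h| by rewrite normr_gt0.
rewrite ler_pdivrMr //.
apply: le_trans r1 _.
rewrite -(real_normK (num_real h)).
have : `|h| * C <= e.
  have : `|h| * (C + 1) < e by rewrite -ltr_pdivlMr //; lra.
  nra.
nra.
Unshelve. all: by end_near.
Qed.

Lemma deriv_inv (S : R -> R) (B K C δ : R) : 0 < δ -> 0 <= C -> 0 < B ->
  (forall y, `|y| < δ -> exists r, 0 <= r <= y ^+ 2 * C /\ S y = B + y * K + r) ->
  derive1 (fun y => (S y)^-1) 0 = - K / B ^+ 2.
Proof.
move=> hd hC hB hS.
have S0 : S 0 = B.
  have [r [/andP[r0 r1] ->]] : exists r, 0 <= r <= 0 ^+ 2 * C /\ S 0 = B + 0 * K + r.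
    by apply: hS; rewrite normr0.
  move: r1; rewrite expr0n /= mul0r => r1.
  have -> : r = 0 by apply/eqP; rewrite eq_le r1 r0.
  by rewrite mul0r !addr0.
have hq := @qcvg S B K C δ hd hC hS.
have eqf : (fun h : R => h^-1 *: ((S \o shift 0) (h *: 1) - S 0)) =
           (fun h => h^-1 * (S h - S 0)).
  apply: funext => h /=; rewrite addr0.
  by rewrite -[h%:A]/(h * 1) mulr1.
have hD : is_derive (0:R) (1:R) S K.
  apply: DeriveDef.
    by rewrite /derivable eqf; apply/cvg_ex; exists K.
  by rewrite /derive eqf; apply: cvg_lim.
have hS0 : S 0 != 0 by rewrite S0 gt_eqF.
have hV := is_deriveV hS0 hD.
rewrite derive1E derive_val S0.
by rewrite /GRing.scale /=; field; rewrite gt_eqF.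
Qed.

Definition cst : R := (Num.sqrt (2 * pi))^-1.
Lemma cst_gt0 : 0 < cst.
Proof. by rewrite /cst invr_gt0 sqrtr_gt0 mulr_gt0 // pi_gt0. Qed.

Lemma cst_sq_le1 : cst ^+ 2 <= 1.
Proof.
rewrite /cst exprVn sqr_sqrtr ?mulr_ge0 ?pi_ge0 // invf_le1 ?mulr_gt0 ?pi_gt0 //.
have := @pi_ge2 R; lra.
Qed.

Lemma mser_sum (Q : nat -> \bar R) k u : mser Q k u \is a fin_num ->
  (\sum_(n <oo) (mterm u k (Q n))%:E = (fine (\sum_(n <oo) (mterm u k (Q n))%:E))%:E)%E
  /\ fine (mser Q k u) = cst * fine (\sum_(n <oo) (mterm u k (Q n))%:E)%E.
Proof.
rewrite /mser -/cst.
have X0 : (0 <= \sum_(n <oo) (mterm u k (Q n))%:E)%E.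
  by apply: nneseries_ge0 => n _ _; rewrite lee_fin mterm_ge0.
move: X0; case: (\sum_(n <oo) (mterm u k (Q n))%:E)%E => [x| |] //= _.
by rewrite mulry gtr0_sg ?cst_gt0 // mul1e.
Qed.

Lemma mterm10 (q : \bar R) : mterm 1 0 q = gq q.
Proof. by case: q => //= r; rewrite expr0 mulr1 mulr1. Qed.

Lemma mterm11 (q : \bar R) : mterm 1 1 q = gq q * pp (fine q) + gq q * nn (fine q).
Proof. by case: q => [r| |] /=; rewrite ?mul0r ?addr0 // expr1 mulr1 -mulrDr norm_ppnn. Qed.

Lemma fin_le (X : \bar R) (y : R) : (0 <= X)%E -> (X <= y%:E)%E -> X = (fine X)%:E.
Proof.
move=> h0 h1; rewrite fineK // ge0_fin_numE //.
by apply: le_lt_trans h1 _; exact: ltry.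
Qed.

Definition Bq (Q : nat -> \bar R) := fine (\sum_(n <oo) (gq (Q n))%:E)%E.
Definition Pq (Q : nat -> \bar R) := fine (\sum_(n <oo) (gq (Q n) * pp (fine (Q n)))%:E)%E.
Definition Nq (Q : nat -> \bar R) := fine (\sum_(n <oo) (gq (Q n) * nn (fine (Q n)))%:E)%E.

Lemma Qfacts (Q : nat -> \bar R) :
  mser Q 0 1 \is a fin_num -> mser Q 1 1 \is a fin_num -> (0 < mser Q 0 1)%E ->
  (\sum_(n <oo) (gq (Q n))%:E = (Bq Q)%:E)%E /\
      (\sum_(n <oo) (gq (Q n) * pp (fine (Q n)))%:E = (Pq Q)%:E)%E /\
      (\sum_(n <oo) (gq (Q n) * nn (fine (Q n)))%:E = (Nq Q)%:E)%E /\
      0 < Bq Q /\ 0 <= Pq Q /\ 0 <= Nq Q /\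
      fine (mser Q 1 1) = cst * (Pq Q + Nq Q) /\ fine (mser Q 0 1) = cst * Bq Q.
Proof.
move=> f0 f1 hp.
have [e0 m0] := mser_sum _ _ _ f0.
have [e1 m1] := mser_sum _ _ _ f1.
have eB : (\sum_(n <oo) (gq (Q n))%:E = (Bq Q)%:E)%E.
  rewrite /Bq; under eq_eseriesr do rewrite -mterm10; exact: e0.
have sD : (\sum_(n <oo) (mterm 1 1 (Q n))%:E =
   \sum_(n <oo) (gq (Q n) * pp (fine (Q n)))%:E +
   \sum_(n <oo) (gq (Q n) * nn (fine (Q n)))%:E)%E.
  rewrite -nneseriesD; last 2 first.
  - by move=> n _ _; rewrite lee_fin; nng.
  - by move=> n _ _; rewrite lee_fin; nng.
  by apply: eq_eseriesr => n _; rewrite mterm11 EFinD.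
have gP : (0 <= \sum_(n <oo) (gq (Q n) * pp (fine (Q n)))%:E)%E.
  by apply: nneseries_ge0 => n _ _; rewrite lee_fin; nng.
have gN : (0 <= \sum_(n <oo) (gq (Q n) * nn (fine (Q n)))%:E)%E.
  by apply: nneseries_ge0 => n _ _; rewrite lee_fin; nng.
have eP : (\sum_(n <oo) (gq (Q n) * pp (fine (Q n)))%:E = (Pq Q)%:E)%E.
  apply: (@fin_le _ (fine (\sum_(n <oo) (mterm 1 1 (Q n))%:E)%E)) => //.
  by rewrite -e1 sD; apply: leeDl.
have eN : (\sum_(n <oo) (gq (Q n) * nn (fine (Q n)))%:E = (Nq Q)%:E)%E.
  apply: (@fin_le _ (fine (\sum_(n <oo) (mterm 1 1 (Q n))%:E)%E)) => //.
  by rewrite -e1 sD; apply: leeDr.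
split => //; split => //; split => //; split; last split; last split.
- move: hp; rewrite /mser -/cst.
  under eq_eseriesr do rewrite mterm10.
  rewrite eB -EFinM lte_fin => hp.
  by rewrite -(pmulr_rgt0 _ cst_gt0).
- by rewrite /Pq; rewrite fine_ge0.
- by rewrite /Nq; rewrite fine_ge0.
split.
  by rewrite m1 sD eP eN.
rewrite m0 /Bq; congr (_ * fine _); apply: eq_eseriesr => n _; by rewrite mterm10.
Qed.

Lemma zderiv (Q1 Q2 : nat -> \bar R) (u0 M1 M2 : R) :
  1 < u0 ->
  mser Q1 0 1 \is a fin_num -> mser Q1 1 1 \is a fin_num -> (0 < mser Q1 0 1)%E ->
  mser Q2 0 1 \is a fin_num -> mser Q2 1 1 \is a fin_num -> (0 < mser Q2 0 1)%E ->
  (\sum_(n <oo) (mterm u0 2 (Q1 n))%:E = M1%:E)%E ->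
  (\sum_(n <oo) (mterm u0 2 (Q2 n))%:E = M2%:E)%E ->
  derive1 (zfun Q1 Q2) 0 =
    - ((Pq Q1 - Nq Q1) * (Pq Q2 - Nq Q2)) / (Bq Q1 * Bq Q2) ^+ 2.
Proof.
move=> hu a0 a1 ap b0 b1 bp hM1 hM2.
have [hB1 [hP1 [hN1 [B1p _]]]] := Qfacts _ a0 a1 ap.
have [hB2 [hP2 [hN2 [B2p _]]]] := Qfacts _ b0 b1 bp.
have M10 : 0 <= M1.
  rewrite -lee_fin -hM1; apply: nneseries_ge0 => n _ _; rewrite lee_fin; nng.
have M20 : 0 <= M2.
  rewrite -lee_fin -hM2; apply: nneseries_ge0 => n _ _; rewrite lee_fin; nng.
have hd : 0 < 1 - u0^-1.
  by rewrite subr_gt0 invf_lt1 //; lra.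
rewrite /zfun.
apply: (@deriv_inv (fun y => fine (\sum_(n0 <oo) \sum_(n1 <oo) (zterm y (Q1 n0) (Q2 n1))%:E)%E)
   _ _ (M1 * M2) (1 - u0^-1) hd (mulr_ge0 M10 M20) (mulr_gt0 B1p B2p)).
move=> y hy.
have [r [hr ->]] := Sexp _ _ _ _ _ _ _ _ _ _ _ _ hu (ltW hy) hB1 hB2 hP1 hP2 hN1 hN2 hM1 hM2.
exists r; split; [by rewrite mulrA | by []].
Qed.
End S.

Theorem mainTheorem10 (R : realType) (d : nat)
  (dT : measure_display) (T : measurableType dT) (P : probability T R)
  (X : 'I_d -> T -> nat)
  (hX : forall i, measurable_fun setT (X i))
  (hfin : forall i : 'I_d, exists2 eps : R, 0 < eps &
     forall (k : nat) (u : R), (k <= 2)%N -> `|u - 1| < eps ->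
       mser (Qseq P X i) k u \is a fin_num)
  (hpos : forall i : 'I_d, (0 < mser (Qseq P X i) 0 1)%E) :
  let z i j := zfun (Qseq P X i) (Qseq P X j) in
  psd (\matrix_(i < d, j < d) - derive1 (z i j) 0) /\
  forall i : 'I_d,
    `|derive1 (z i i) 0| <=
      (fine (mser (Qseq P X i) 1 1)) ^+ 2 / (fine (mser (Qseq P X i) 0 1)) ^+ 4.
Proof.
move=> z.
pose Q i := Qseq P X i.
have f0 i : mser (Q i) 0 1 \is a fin_num.
  by have [e e0 h] := hfin i; apply: h => //; rewrite subrr normr0.
have f1 i : mser (Q i) 1 1 \is a fin_num.
  by have [e e0 h] := hfin i; apply: h => //; rewrite subrr normr0.
pose v (i : 'I_d) := (Pq (Q i) - Nq (Q i)) / (Bq (Q i)) ^+ 2.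
have Bpos i : 0 < Bq (Q i).
  by have [_ [_ [_ [h _]]]] := Qfacts _ (f0 i) (f1 i) (hpos i).
have hD i j : derive1 (z i j) 0 = - (v i * v j).
  have [ei ei0 hi] := hfin i.
  have [ej ej0 hj] := hfin j.
  pose e := Num.min ei ej.
  have e0 : 0 < e by rewrite lt_min ei0 ej0.
  have : e <= e := lexx e.
  rewrite {2}/e le_min => /andP[hei hej].
  pose u0 := 1 + e / 2.
  have hu : 1 < u0 by rewrite /u0; lra.
  have hn : `|u0 - 1| < e.
    by rewrite /u0 addrC addKr ger0_norm; lra.
  have [mi _] := mser_sum _ _ _ (hi 2%N u0 isT (lt_le_trans hn hei)).
  have [mj _] := mser_sum _ _ _ (hj 2%N u0 isT (lt_le_trans hn hej)).
  rewrite /z (zderiv _ _ _ _ _ hu (f0 i) (f1 i) (hpos i) (f0 j) (f1 j) (hpos j) mi mj).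
  rewrite /v; have := Bpos i; have := Bpos j => bj bi.
  by field; rewrite ?gt_eqF.
split.
  have -> : (\matrix_(i < d, j < d) - derive1 (z i j) 0) =
            \matrix_(i < d, j < d) (v i * v j).
    by apply/matrixP => i j; rewrite !mxE hD opprK.
  split.
    by apply/matrixP => i j; rewrite !mxE mulrC.
  move=> w.
  have -> : (w *m (\matrix_(i < d, j < d) (v i * v j)) *m w^T) 0 0 =
            (\sum_(i < d) w 0 i * v i) * (\sum_(j < d) w 0 j * v j).
    rewrite mxE [RHS]big_distrr /=; apply: eq_bigr => j _.
    rewrite !mxE !big_distrl /=; apply: eq_bigr => i _.
    by rewrite !mxE; ring.
  by rewrite -expr2 sqr_ge0.
move=> i.
have [_ [_ [_ [bp [p0 [n0 [m1 m0]]]]]]] := Qfacts _ (f0 i) (f1 i) (hpos i).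
rewrite hD -/(Q i) m1 m0 normrN /v.
set B := Bq (Q i). set Pi := Pq (Q i). set Ni := Nq (Q i).
have p0' : 0 <= Pi := p0. have n0' : 0 <= Ni := n0. have bp' : 0 < B := bp.
have c0 : 0 < (cst : R) := cst_gt0. have c1 : (cst : R) ^+ 2 <= 1 := cst_sq_le1.
have -> : (cst * (Pi + Ni)) ^+ 2 / (cst * B) ^+ 4 =
          ((Pi + Ni) ^+ 2 / cst ^+ 2) / B ^+ 4.
  by field; rewrite !gt_eqF.
have -> : `|(Pi - Ni) / B ^+ 2 * ((Pi - Ni) / B ^+ 2)| = (Pi - Ni) ^+ 2 / B ^+ 4.
  rewrite ger0_norm; first by field; rewrite gt_eqF.
  by rewrite -expr2 sqr_ge0.
apply: ler_wpM2r; first by rewrite invr_ge0 exprn_ge0 // ltW.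
have h1 : (Pi - Ni) ^+ 2 <= (Pi + Ni) ^+ 2.
  have -> : (Pi + Ni) ^+ 2 = (Pi - Ni) ^+ 2 + 4 * (Pi * Ni) by ring.
  by rewrite lerDl mulr_ge0 // mulr_ge0.
apply: le_trans h1 _.
rewrite ler_pdivlMr ?exprn_gt0 //.
by rewrite ler_piMr // sqr_ge0.
Qed.
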